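(* For every point $(w,z)\in\mathbb{R}^2$ there exist sequences $(p_n)_{n\ge1}$, $(q_n)_{n\ge1}$, $(\gamma_n)_{n\ge1}$ such that: (1) $(p_n)$ and $(q_n)$ are increasing sequences of rational numbers converging to $w$ and $z$ respectively; (2) each $\gamma_n$ is a positive rational number; (3) setting $\Delta_n:=p_{n+1}-p_n$, we have $0<\Delta_n<1$ and $q_{n+1}=q_n+\Delta_n(1+\gamma_n)$ for all $n$; (4) $\lim_{n\to\infty}\gamma_n/(\Delta_n)^{n-1}=0$. *)

(* Defs.v *)
From Stdlib Require Export Reals QArith Qreals.
Open Scope R_scope.

Definition DeltaQ (p : nat -> Q) (n : nat) : R := Q2R (p (S n)) - Q2R (p n).

(* Main.v *)
Require Import Defs.
From Stdlib Require Import Reals QArith Qreals Lra Lia.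
Open Scope R_scope.

Fixpoint pow2 (k : nat) : positive :=
  match k with O => 1%positive | S k => xO (pow2 k) end.
Definition Fl (y : R) : Z := (up y - 1)%Z.
Definition Aq (x : R) (k : nat) : Q := (Fl (x * 2 ^ k) - 1)%Z # pow2 k.

Lemma pow2_IZR k : IZR (Zpos (pow2 k)) = 2 ^ k.
Proof.
  induction k as [|k IH]; simpl; [reflexivity|].
  rewrite Pos2Z.inj_xO, mult_IZR, IH. reflexivity.
Qed.

Lemma Aq_val x k : Q2R (Aq x k) = (IZR (Fl (x * 2 ^ k)) - 1) / 2 ^ k.
Proof.
  unfold Q2R, Aq; simpl. rewrite minus_IZR, pow2_IZR. reflexivity.
Qed.

Lemma Fl_spec y : IZR (Fl y) <= y < IZR (Fl y) + 1.
Proof.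
  unfold Fl. rewrite minus_IZR. destruct (archimed y). simpl. lra.
Qed.

Lemma Fl_max n y : IZR n <= y -> (n <= Fl y)%Z.
Proof.
  intros H. unfold Fl. destruct (archimed y).
  assert (IZR n < IZR (up y)) by lra. apply lt_IZR in H2. lia.
Qed.

Lemma pow2_pos k : 0 < 2 ^ k.
Proof. apply pow_lt; lra. Qed.

Lemma Aq_bounds x k : x - 2 / 2 ^ k < Q2R (Aq x k) <= x - 1 / 2 ^ k.
Proof.
  rewrite Aq_val. set (s := 2 ^ k). assert (Hs : 0 < s) by apply pow2_pos.
  destruct (Fl_spec (x * s)) as [H1 H2]. fold s in H1, H2 |- *.
  set (F := IZR (Fl (x * s))) in *.
  assert (Hi : 0 < / s) by (apply Rinv_0_lt_compat; lra).
  replace (x - 2 / s) with ((x * s - 2) * / s) by (field; lra).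
  replace (x - 1 / s) with ((x * s - 1) * / s) by (field; lra).
  unfold Rdiv. split.
  - apply Rmult_lt_compat_r; lra.
  - apply Rmult_le_compat_r; lra.
Qed.

Lemma Aq_mono x k m : (k <= m)%nat ->
  Q2R (Aq x k) + 1 / 2 ^ k <= Q2R (Aq x m) + 1 / 2 ^ m.
Proof.
  intros Hkm. rewrite !Aq_val.
  destruct (Nat.le_exists_sub k m Hkm) as [j [Hj _]]. subst m.
  rewrite Nat.add_comm, pow_add.
  pose proof (pow2_pos k) as Hk. pose proof (pow2_pos j) as Hj.
  set (Fk := Fl (x * 2 ^ k)). set (Fm := Fl (x * (2 ^ k * 2 ^ j))).
  assert (HF : (Fk * Zpos (pow2 j) <= Fm)%Z).
  { apply Fl_max. rewrite mult_IZR, pow2_IZR.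
    destruct (Fl_spec (x * 2 ^ k)) as [H1 _]. fold Fk in H1.
    replace (x * (2 ^ k * 2 ^ j)) with ((x * 2 ^ k) * 2 ^ j) by ring.
    apply Rmult_le_compat_r; lra. }
  apply IZR_le in HF. rewrite mult_IZR, pow2_IZR in HF.
  replace ((IZR Fk - 1) / 2 ^ k + 1 / 2 ^ k) with ((IZR Fk * 2 ^ j) * / (2 ^ k * 2 ^ j)) by (field; lra).
  replace ((IZR Fm - 1) / (2 ^ k * 2 ^ j) + 1 / (2 ^ k * 2 ^ j)) with (IZR Fm * / (2 ^ k * 2 ^ j)) by (field; lra).
  apply Rmult_le_compat_r; [|lra].
  left; apply Rinv_0_lt_compat; apply Rmult_lt_0_compat; lra.
Qed.

Lemma cv_helper (a : nat -> R) (l C : R) : 0 < C ->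
  (forall n, (1 <= n)%nat -> Rabs (a n - l) <= C * (/ 2) ^ n) -> Un_cv a l.
Proof.
  intros HC H eps Heps.
  assert (Hh : Rabs (/2) < 1) by (rewrite Rabs_right; lra).
  destruct (pow_lt_1_zero (/2) Hh (eps / C)) as [N HN].
  { apply Rdiv_lt_0_compat; lra. }
  exists (max N 1). intros n Hn. unfold R_dist.
  eapply Rle_lt_trans; [apply H; lia|].
  specialize (HN n ltac:(lia)).
  assert (0 <= (/2) ^ n) by (apply pow_le; lra).
  rewrite Rabs_right in HN by lra.
  replace eps with (C * (eps / C)) by (field; lra).
  apply Rmult_lt_compat_l; lra.
Qed.

Lemma inv_pow2 n : / 2 ^ n = (/ 2) ^ n.
Proof. rewrite pow_inv. reflexivity. Qed.

Theorem lemma5p5 (w z : R) :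
  exists p q g : nat -> Q,
    (forall n : nat, (1 <= n)%nat -> Q2R (p n) < Q2R (p (S n))) /\
    (forall n : nat, (1 <= n)%nat -> Q2R (q n) < Q2R (q (S n))) /\
    Un_cv (fun n => Q2R (p n)) w /\
    Un_cv (fun n => Q2R (q n)) z /\
    (forall n : nat, (1 <= n)%nat -> 0 < Q2R (g n)) /\
    (forall n : nat, (1 <= n)%nat ->
       0 < DeltaQ p n < 1 /\
       Q2R (q (S n)) = Q2R (q n) + DeltaQ p n * (1 + Q2R (g n))) /\
    Un_cv (fun n => Q2R (g n) / (DeltaQ p n) ^ (n - 1)) 0.
Proof.
  set (p := fun n : nat => Aq w (S n)).
  set (b := fun n : nat => Aq (z - w) (n * (n + 3))).
  set (q := fun n => Qplus (p n) (b n)).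
  set (g := fun n => Qdiv (Qminus (b (S n)) (b n)) (Qminus (p (S n)) (p n))).
  assert (HD : forall n, / 2 ^ (S (S n)) <= DeltaQ p n < / 2 ^ n).
  { intros n. unfold DeltaQ, p.
    pose proof (Aq_mono w (S n) (S (S n)) ltac:(lia)).
    pose proof (Aq_bounds w (S n)). pose proof (Aq_bounds w (S (S n))).
    pose proof (pow2_pos n).
    simpl pow in *. 
    assert (/ (2 * (2 * 2 ^ n)) = 1 / (2 * 2 ^ n) - 1 / (2 * (2 * 2 ^ n))) by (field; lra).
    assert (/ 2 ^ n = 2 / (2 * 2 ^ n)) by (field; lra).
    assert (0 < 1 / (2 * (2 * 2 ^ n))) by (apply Rdiv_lt_0_compat; lra).
    lra. }
  assert (HU : forall n, 0 < Q2R (b (S n)) - Q2R (b n) < 2 / 2 ^ (n * (n + 3))).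
  { intros n. unfold b.
    assert (Hkm : (n * (n + 3) < S n * (S n + 3))%nat) by nia.
    pose proof (Aq_mono (z - w) _ _ (Nat.lt_le_incl _ _ Hkm)).
    pose proof (Aq_bounds (z - w) (n * (n + 3))).
    pose proof (Aq_bounds (z - w) (S n * (S n + 3))).
    pose proof (pow2_pos (n * (n + 3))).
    pose proof (pow2_pos (S n * (S n + 3))).
    assert (Hlt : 2 ^ (n * (n + 3)) < 2 ^ (S n * (S n + 3))) by (apply Rlt_pow; lra || lia).
    assert (1 / 2 ^ (S n * (S n + 3)) < 1 / 2 ^ (n * (n + 3))).
    { unfold Rdiv. rewrite !Rmult_1_l. apply Rinv_lt_contravar; [apply Rmult_lt_0_compat|]; lra. }
    split; [lra|].
    assert (0 < 1 / 2 ^ (S n * (S n + 3))) by (apply Rdiv_lt_0_compat; lra).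
    lra. }
  assert (HDpos : forall n, 0 < DeltaQ p n).
  { intros n. destruct (HD n). pose proof (pow2_pos (S (S n))).
    assert (0 < / 2 ^ S (S n)) by (apply Rinv_0_lt_compat; lra). lra. }
  assert (Hg : forall n, Q2R (g n) = (Q2R (b (S n)) - Q2R (b n)) / DeltaQ p n).
  { intros n. unfold g. rewrite Q2R_div.
    - rewrite !Q2R_minus. reflexivity.
    - intros E. apply Qeq_eqR in E. rewrite Q2R_minus in E.
      specialize (HDpos n). unfold DeltaQ in HDpos. change (Q2R 0) with (0 * / 1) in E. lra. }
  assert (Hq : forall n, Q2R (q n) = Q2R (p n) + Q2R (b n)).
  { intros n. unfold q. apply Q2R_plus. }
  exists p, q, g. split; [|split; [|split; [|split; [|split; [|split]]]]].
  - intros n _. specialize (HDpos n). unfold DeltaQ in HDpos. lra.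
  - intros n _. rewrite !Hq. specialize (HDpos n). specialize (HU n).
    unfold DeltaQ in HDpos. lra.
  - apply (cv_helper _ _ 2); [lra|]. intros n _. unfold p.
    pose proof (Aq_bounds w (S n)). rewrite Rabs_left1 by (pose proof (pow2_pos (S n)); assert (0 < 1/ 2 ^ S n) by (apply Rdiv_lt_0_compat; lra); lra).
    rewrite <- inv_pow2. simpl pow in *. pose proof (pow2_pos n).
    assert (2 / (2 * 2 ^ n) = / 2 ^ n) by (field; lra).
    assert (0 < / 2 ^ n) by (apply Rinv_0_lt_compat; lra). lra.
  - apply (cv_helper _ _ 4); [lra|]. intros n _. rewrite Hq. unfold p, b.
    pose proof (Aq_bounds w (S n)). pose proof (Aq_bounds (z - w) (n * (n + 3))).
    pose proof (pow2_pos n). pose proof (pow2_pos (n * (n + 3))).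
    assert (2 ^ n <= 2 ^ (n * (n + 3))) by (apply Rle_pow; [lra|nia]).
    assert (/ 2 ^ (n * (n + 3)) <= / 2 ^ n) by (apply Rinv_le_contravar; lra).
    assert (0 < / 2 ^ (n * (n + 3))) by (apply Rinv_0_lt_compat; lra).
    rewrite <- inv_pow2. simpl pow in *.
    assert (2 / (2 * 2 ^ n) = / 2 ^ n) by (field; lra).
    assert (1 / (2 * 2 ^ n) = / 2 ^ n / 2) by (field; lra).
    unfold Rdiv in *. rewrite Rmult_1_l in *.
    apply Rabs_le. lra.
  - intros n _. rewrite Hg. apply Rdiv_lt_0_compat; [apply HU | apply HDpos].
  - intros n Hn. split; [split|].
    + apply HDpos.
    + destruct (HD n). assert (/ 2 ^ n <= / 2 ^ 1).
      { apply Rinv_le_contravar; [apply pow2_pos|]. apply Rle_pow; [lra|lia]. }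
      simpl pow in H1. lra.
    + rewrite !Hq, Hg. specialize (HDpos n). unfold DeltaQ in *. field. lra.
  - apply (cv_helper _ _ 2); [lra|]. intros n Hn. rewrite Hg.
    destruct n as [|m]; [lia|]. replace (S m - 1)%nat with m by lia.
    set (n := S m). set (D := DeltaQ p n). set (u := Q2R (b (S n)) - Q2R (b n)).
    assert (HDn := HD n). assert (HUn := HU n). fold D u in HDn, HUn.
    assert (HD0 : 0 < D) by apply HDpos.
    assert (E : u / D / D ^ m = u / D ^ n) by (unfold n; simpl; field; split; [apply pow_nonzero|]; lra).
    rewrite E, Rminus_0_r.
    assert (HDn0 : 0 < D ^ n) by (apply pow_lt; lra).
    rewrite Rabs_right by (apply Rle_ge; left; apply Rdiv_lt_0_compat; lra).
    set (L := / 2 ^ S (S n)).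
    assert (HL : 0 < L) by (apply Rinv_0_lt_compat, pow2_pos).
    assert (HLn : L ^ n <= D ^ n) by (apply pow_incr; split; [lra|]; destruct HDn as [HDa _]; exact HDa).
    assert (HLn0 : 0 < L ^ n) by (apply pow_lt; lra).
    assert (Hk : 2 ^ (n * (n + 3)) = (2 ^ (S (S n))) ^ n * 2 ^ n).
    { rewrite <- pow_mult, <- pow_add. f_equal. lia. }
    assert (HLe : L ^ n = / (2 ^ (S (S n))) ^ n) by (unfold L; rewrite pow_inv; reflexivity).
    apply Rle_trans with (u / L ^ n).
    { unfold Rdiv. apply Rmult_le_compat_l; [lra|]. apply Rinv_le_contravar; lra. }
    apply Rle_trans with (2 / 2 ^ (n * (n + 3)) / L ^ n).
    { unfold Rdiv. apply Rmult_le_compat_r; [left; apply Rinv_0_lt_compat; lra|]. lra. }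
    rewrite Hk, HLe, <- inv_pow2.
    pose proof (pow2_pos n). pose proof (pow2_pos (S (S n))).
    assert (0 < (2 ^ S (S n)) ^ n) by (apply pow_lt; lra).
    right. field. split; lra.
Qed.
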